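(* Let $G$ be a finite abelian group and $S\subset G$ a partial symmetric Sidon set with center $0$. If $T\subset G$ is a subset with $T\cap(-T)=\emptyset$, then $S\cap T$ is a Sidon set.
   Context: A subset $S\subset G$ is a Sidon set if every solution $(\alpha,\beta,\gamma,\delta)\in S^4$ of $\alpha+\beta=\gamma+\delta$ satisfies $\alpha\in\{\gamma,\delta\}$. $S$ is a partial symmetric Sidon set with center $a_0\in S$ if every solution $(\alpha,\beta,\gamma,\delta)\in S^4$ of $\alpha+\beta=\gamma+\delta$ satisfies either $\alpha\in\{\gamma,\delta\}$ or $\alpha+\beta=\gamma+\delta=a_0$. *)

(* Defs.v *)
From mathcomp Require Import all_boot all_order all_algebra.
Set Implicit Arguments. Unset Strict Implicit. Unset Printing Implicit Defensive.
Import GRing.Theory.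
Local Open Scope ring_scope.

Definition sidon (G : finZmodType) (S : {set G}) : Prop :=
  forall a b c d : G, a \in S -> b \in S -> c \in S -> d \in S ->
    a + b = c + d -> a = c \/ a = d.

Definition partial_symmetric_sidon (G : finZmodType) (S : {set G}) (a0 : G) : Prop :=
  a0 \in S /\
  forall a b c d : G, a \in S -> b \in S -> c \in S -> d \in S ->
    a + b = c + d -> (a = c \/ a = d) \/ (a + b = a0 /\ c + d = a0).

(* Main.v *)
Require Import Defs.
From mathcomp Require Import all_boot all_order all_algebra.
Import GRing.Theory.
Local Open Scope ring_scope.

Theorem lemma5p1 (G : finZmodType) (S T : {set G}) :
  partial_symmetric_sidon S 0 ->
  T :&: [set - x | x in T] = set0 ->
  sidon (S :&: T).
Proof.
move=> [_ H] HT a b c d.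
rewrite !inE => /andP[aS aT] /andP[bS bT] /andP[cS cT] /andP[dS dT] e.
case: (H a b c d aS bS cS dS e) => // [[ab0 _]].
exfalso.
have hb : b = - a by apply/eqP; rewrite -(addKr a b) ab0 addr0.
have : b \in T :&: [set - x | x in T].
  by rewrite inE bT /=; apply/imsetP; exists a.
by rewrite HT inE.
Qed.
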